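(* For every positively oriented $J$-basis $E$ of $\mathbb{R}^{2n,2n-1}$, the complement $\mathbb{R}^{4n-1}\setminus\mathcal{H}_E$ of the open crooked halfspace of $E$ equals the closed crooked halfspace $\overline{\mathcal{H}}_{\widehat E}$ of the opposite basis.
   Context: $\mathbb{R}^{2n,2n-1}$ is $\mathbb{R}^{4n-1}$ with form $v^TJw$, $J$ antidiagonal with $J_{i,4n-i}=(-1)^i$; a $J$-basis is one in which the Gram matrix is $J$. For $E=(e_1,\dots,e_{4n-1})$, the opposite basis is $\widehat E=(e_{4n-1},-e_{4n-2},e_{4n-3},\dots,-e_2,e_1)$. For a nonzero vector $v$, $S^+_E(v)$ (resp. $S^-_E(v)$) is the number of sign changes of its coordinate sequence in $E$ when signs are assigned to zero coordinates so as to maximize (resp. minimize) this number. $\mathcal{H}_E=\{v: S^+_E(v)\le 2n-1$, and in case of equality the sign of the last coordinate used in computing $S^+_E$ is positive$\}$; $\overline{\mathcal{H}}_E=\{v: S^-_E(v)\le 2n-1$, and in case of equality the last nonzero coordinate is positive$\}$. *)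

(* Defs.v *)
From HB Require Import structures.
From mathcomp Require Import all_boot all_order all_algebra.
From mathcomp Require Import reals.
Set Implicit Arguments. Unset Strict Implicit. Unset Printing Implicit Defensive.
Import Order.TTheory GRing.Theory Num.Theory.
Local Open Scope ring_scope.

Section Crooked.
Variable R : realType.

Definition sgn_compat (c : seq R) (s : seq bool) : bool :=
  all2 (fun x b => ((0 < x) ==> b) && ((x < 0) ==> ~~ b)) c s.

Definition nchanges (s : seq bool) : nat :=
  count (fun p => p.1 != p.2) (zip s (behead s)).

Definition Splus (c : seq R) : nat :=
  \max_(s : (size c).-tuple bool | sgn_compat c s) nchanges s.

Definition Sminus (c : seq R) : nat :=
  \big[minn/size c]_(s : (size c).-tuple bool | sgn_compat c s) nchanges s.

(* The form J on R^N (0-indexed): J i j = (-1)^(i+1) if i + j = N - 1,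
   i.e. 1-indexed J_{i,4n-i} = (-1)^i when N = 4n-1. *)
Definition Jmat (N : nat) : 'M[R]_N :=
  \matrix_(i < N, j < N) (if (i + j == N.-1)%N then (-1) ^+ i.+1 else 0).

(* E is a J-basis: columns e_1..e_N form a basis with Gram matrix J. *)
Definition is_Jbasis (N : nat) (E : 'M[R]_N) : bool :=
  (E \in unitmx) && (E^T *m Jmat N *m E == Jmat N).

Definition coords (N : nat) (E : 'M[R]_N) (v : 'cV[R]_N) : seq R :=
  [seq (invmx E *m v) i 0 | i <- enum 'I_N].

(* opposite basis: (e_N, -e_{N-1}, e_{N-2}, ..., -e_2, e_1) *)
Definition opp_basis (N : nat) (E : 'M[R]_N) : 'M[R]_N :=
  \matrix_(i < N, j < N) ((-1) ^+ j * E i (rev_ord j)).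

Definition Hopen (n : nat) (E : 'M[R]_((4 * n).-1)) (v : 'cV[R]_((4 * n).-1))
  : Prop :=
  let c := coords E v in
  (Splus c <= (2 * n).-1)%N /\
  (Splus c = (2 * n).-1 ->
     exists s : (size c).-tuple bool,
       [/\ sgn_compat c s, nchanges s = Splus c & last false s = true]).

Definition Hclosed (n : nat) (E : 'M[R]_((4 * n).-1)) (v : 'cV[R]_((4 * n).-1))
  : Prop :=
  let c := coords E v in
  (Sminus c <= (2 * n).-1)%N /\
  (Sminus c = (2 * n).-1 -> 0 < last 0 [seq x <- c | x != 0]).

End Crooked.

(* Main.v *)
Require Import Defs.
From HB Require Import structures.
From mathcomp Require Import all_boot all_order all_algebra.
From mathcomp Require Import reals.
From mathcomp Require Import zify.
Import Order.TTheory GRing.Theory Num.Theory.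
Local Open Scope ring_scope.
Set Implicit Arguments. Unset Strict Implicit.

Fixpoint altB (s : seq bool) : seq bool :=
  if s is b :: s' then b :: map negb (altB s') else [::].

Lemma size_altB s : size (altB s) = size s.
Proof. by elim: s => //= b s IH; rewrite size_map IH. Qed.

Lemma nth_altB s i : (i < size s)%N -> nth false (altB s) i = nth false s i (+) odd i.
Proof.
elim: s i => [|b s IH] [|i] //= Hi.
  by rewrite addbF.
rewrite (nth_map false) ?size_altB // IH //.
by rewrite addbN.
Qed.

Lemma altB_negb s : altB (map negb s) = map negb (altB s).
Proof. by elim: s => //= b s ->. Qed.

Lemma altBK s : altB (altB s) = s.
Proof.
elim: s => //= b s IH; rewrite altB_negb -map_comp.
rewrite (@eq_map _ _ _ id) ?map_id ?IH // => x /=; by rewrite negbK.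
Qed.

Lemma nchanges_cons2 a b s : nchanges (a :: b :: s) = ((a != b) + nchanges (b :: s))%N.
Proof. by []. Qed.

Lemma nchanges_cons a u :
  nchanges (a :: u) = (((0 < size u)%N && (a != head a u)) + nchanges u)%N.
Proof. by case: u. Qed.

Lemma nchanges_negb s : nchanges (map negb s) = nchanges s.
Proof.
elim: s => // a s IH; case: s IH => [|c s] IH //.
rewrite /= nchanges_cons2 nchanges_cons2 -IH /=.
by case: a; move: IH; case: c.
Qed.

Lemma nchanges_alt s : (nchanges (altB s) + nchanges s)%N = (size s).-1.
Proof.
elim: s => // b s IH.
case: s IH => [|c s] IH //=.
rewrite -[c :: _]/(c :: s) in IH *.
rewrite nchanges_cons2 nchanges_cons2.
have -> : (~~ c :: [seq ~~ i | i <- [seq ~~ i | i <- altB s]]) = map negb (altB (c :: s)) by [].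
rewrite nchanges_negb.
move: IH => /=.
case: b; case: c => /=; lia.
Qed.

Lemma nchanges_rcons s b :
  nchanges (rcons s b) = (nchanges s + ((0 < size s)%N && (last b s != b)))%N.
Proof.
elim: s => [|a s IH] //=.
rewrite nchanges_cons [nchanges (a :: s)]nchanges_cons IH size_rcons /=.
case: s IH => [|x s] IH /=.
  by rewrite addn0; case: (a != b).
lia.
Qed.



Lemma last_rev (x : bool) s : last x (rev s) = head x s.
Proof. by case: s => //= a s; rewrite rev_cons last_rcons. Qed.

Lemma nchanges_rev s : nchanges (rev s) = nchanges s.
Proof.
elim: s => // a s IH.
rewrite rev_cons nchanges_rcons IH size_rev last_rev nchanges_cons.
by rewrite addnC eq_sym.
Qed.

Lemma nchanges_le s : (nchanges s <= size s)%N.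
Proof.
rewrite /nchanges; apply: leq_trans (count_size _ _) _.
by rewrite size_zip geq_minl.
Qed.

Lemma odd_nchanges b t : odd (nchanges (b :: t)) = (b != last b t).
Proof.
elim: t b => [|c t IH] b; first by rewrite /= eqxx.
rewrite nchanges_cons2 oddD IH /=.
by case: b; case: (last c t); case: c.
Qed.

Section Real.
Variable R : realType.

Definition cmp (x : R) (b : bool) := ((0 < x) ==> b) && ((x < 0) ==> ~~ b).

Lemma compat_cons (x : R) c b s : sgn_compat (x :: c) (b :: s) = cmp x b && sgn_compat c s.
Proof. by []. Qed.

Lemma compat_size (c : seq R) s : sgn_compat c s -> size s = size c.
Proof. by rewrite /sgn_compat all2E => /andP[/eqP -> _]. Qed.

Lemma compat_rev (c : seq R) s : sgn_compat (rev c) (rev s) = sgn_compat c s.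
Proof.
rewrite /sgn_compat !all2E !size_rev.
case: eqP => //= /esym Hs.
by rewrite -rev_zip // all_rev.
Qed.

Fixpoint altR (c : seq R) : seq R :=
  if c is x :: c' then x :: map -%R (altR c') else [::].

Lemma size_altR c : size (altR c) = size c.
Proof. by elim: c => //= x c IH; rewrite size_map IH. Qed.

Lemma nth_altR c i : (i < size c)%N -> nth 0 (altR c) i = (-1) ^+ i * nth 0 c i.
Proof.
elim: c i => [|x c IH] [|i] //= Hi.
  by rewrite expr0 mul1r.
by rewrite (nth_map 0) ?size_altR // IH // exprS mulN1r mulNr.
Qed.

Lemma compat_negb (c : seq R) s : sgn_compat (map -%R c) (map negb s) = sgn_compat c s.
Proof.
elim: c s => [|x c IH] [|b s] //=.
by rewrite IH oppr_gt0 oppr_lt0 negbK [X in X && _]andbC.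
Qed.

Lemma compat_alt (c : seq R) s : sgn_compat (altR c) (altB s) = sgn_compat c s.
Proof.
elim: c s => [|x c IH] [|b s] //.
by rewrite /= compat_negb IH.
Qed.

Lemma cmp_nz (x : R) b : cmp x b -> x != 0 -> b = (0 < x).
Proof.
rewrite /cmp => /andP[H1 H2] Hx.
have [Hlt|Hgt|Heq] := ltgtP x 0.
- by move: H2; rewrite Hlt => /negbTE.
- by move: H1; rewrite Hgt.
- by rewrite Heq eqxx in Hx.
Qed.

Lemma compat_pos (c : seq R) : sgn_compat c (map (fun x => 0 < x) c).
Proof.
elim: c => // x c IH; rewrite /= -/(sgn_compat _ _) IH andbT.
apply/andP; split; apply/implyP => // H.
by rewrite lt_gtF.
Qed.

Lemma Splus_ub (c : seq R) s : sgn_compat c s -> (nchanges s <= Splus c)%N.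
Proof.
move=> H; have Hs : size s == size c by rewrite (compat_size H).
rewrite /Splus.
exact: (@leq_bigmax_cond _ (fun t : (size c).-tuple bool => sgn_compat c t)
   (fun t : (size c).-tuple bool => nchanges t) (Tuple Hs) H).
Qed.

Lemma Splus_ex (c : seq R) : exists2 s, sgn_compat c s & nchanges s = Splus c.
Proof.
have Hs : size (map (fun x => 0 < x) c) == size c by rewrite size_map.
rewrite /Splus.
rewrite (@bigop.bigmax_eq_arg _ (Tuple Hs)) /=; last exact: compat_pos.
set t := [arg max_(_ > _ | _) _].
exists (tval t) => //.
rewrite /t; case: (@arg_maxnP _ (Tuple Hs) (fun t : (size c).-tuple bool => sgn_compat c t) (fun t : (size c).-tuple bool => nchanges t) (compat_pos c)).
by [].
Qed.

Lemma Sminus_lb (c : seq R) s : sgn_compat c s -> (Sminus c <= nchanges s)%N.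
Proof.
move=> H; have Hs : size s == size c by rewrite (compat_size H).
rewrite /Sminus.
have : Tuple Hs \in index_enum ((size c).-tuple bool) by rewrite mem_index_enum.
elim: (index_enum _) => // x r IH.
rewrite inE big_cons => /orP[/eqP <- | Hr].
  by rewrite H geq_minl.
case: ifP => _; last exact: IH.
by rewrite geq_min IH ?orbT.
Qed.

Lemma Sminus_ex (c : seq R) : exists2 s, sgn_compat c s & nchanges s = Sminus c.
Proof.
have [|] : Sminus c = size c \/ exists2 s, sgn_compat c s & nchanges s = Sminus c.
  rewrite /Sminus.
  set P := fun x => x = size c \/ exists2 s, sgn_compat c s & nchanges s = x.
  apply: (@big_ind _ P) => //; first by left.
    move=> x y Hx Hy; rewrite /minn; by case: ifP.
  by move=> t Ht; right; exists (tval t).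
- move=> Heq.
  exists (map (fun x => 0 < x) c); first exact: compat_pos.
  apply/eqP; rewrite eqn_leq Sminus_lb ?compat_pos // andbT Heq.
  by rewrite -[X in (_ <= X)%N](size_map (fun x => 0 < x)) nchanges_le.
- by [].
Qed.

End Real.

Section Real2.
Variable R : realType.

Definition lastnz (d : seq R) := last 0 [seq x <- d | x != 0].

Lemma nchanges_cons' a u :
  nchanges (a :: u) = (((0 < size u)%N && (a != head false u)) + nchanges u)%N.
Proof. by case: u. Qed.

Lemma last_nonnil (T : Type) (a b : T) u : (0 < size u)%N -> last a u = last b u.
Proof. by case: u. Qed.

Lemma nchanges_nseq n (b : bool) : nchanges (nseq n b) = 0%N.
Proof. by elim: n => // [[|n]] // IH; rewrite nchanges_cons2 eqxx. Qed.

Lemma last_nseq' n (b : bool) : last b (nseq n b) = b.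
Proof. by elim: n. Qed.

Lemma compat_zero (d : seq R) b : ~~ has (fun x => x != 0) d -> sgn_compat d (nseq (size d) b).
Proof.
elim: d => // x d IH /=; rewrite negb_or negbK => /andP[/eqP -> Hd].
by rewrite -/(sgn_compat _ _) IH // /cmp ltxx.
Qed.

Lemma tailfix (d : seq R) t : sgn_compat d t -> (0 < size d)%N ->
  exists t', [/\ sgn_compat d t', (nchanges t' <= nchanges t)%N,
    head false t' = head false t &
    (has (fun x => x != 0) d -> last false t' = (0 < lastnz d))].
Proof.
elim: d t => [|x d IH] [|b t] // Hc _.
move: Hc; rewrite compat_cons => /andP[Hx Hc].
case Hh: (has (fun x => x != 0) d).
- have Hd : (0 < size d)%N by case: d Hh {IH Hc}.
  have [t1 [H1 H2 H3 H4]] := IH t Hc Hd.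
  exists (b :: t1); split => //.
  + by rewrite compat_cons Hx H1.
  + rewrite !nchanges_cons' (compat_size H1) (compat_size Hc) H3.
    by rewrite leq_add2l.
  + move=> _ /=.
    rewrite (last_nonnil _ false); last by rewrite (compat_size H1).
    rewrite H4 // /lastnz /=.
    have Hf : (0 < size [seq x <- d | x != 0%R])%N.
      by move: Hh; rewrite has_filter; case: [seq _ <- _ | _].
    by case: (x != 0) => //=; rewrite (last_nonnil x 0).
- exists (nseq (size (x :: d)) b); split => //.
  + rewrite compat_cons Hx /= compat_zero //.
    by rewrite Hh.
  + by rewrite nchanges_nseq.
  + rewrite /= Hh orbF => Hx0.
    rewrite last_nseq' /lastnz /=.
    have -> : [seq x <- d | x != 0] = [::].
      by move: Hh; rewrite has_filter; case: [seq _ <- _ | _].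
    by rewrite Hx0 /=; apply: cmp_nz.
Qed.

Lemma minhead (d : seq R) t : sgn_compat d t -> nchanges t = Sminus d ->
  odd (Sminus d) -> (0 < size d)%N -> head false t = ~~ (0 < lastnz d).
Proof.
move=> Hc Hn Ho Hd.
have [t' [H1 H2 H3 H4]] := tailfix Hc Hd.
have Hn' : nchanges t' = Sminus d.
  by apply/eqP; rewrite eqn_leq Sminus_lb // andbT -Hn.
case Hh: (has (fun x => x != 0) d); last first.
  have := Sminus_lb (compat_zero true (negbT Hh)).
  rewrite nchanges_nseq leqn0 => /eqP H0.
  by rewrite H0 in Ho.
rewrite -H3 -(H4 Hh).
case: t' H1 H2 H3 H4 Hn' => [|b u] H1 _ _ _ Hn'.
  by move: (compat_size H1) Hd => /= <-.
clear H1. move: Ho; rewrite -Hn' odd_nchanges /=; clear Hn'; by case: (last b u); case: b.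
Qed.

End Real2.

Section Mat.
Variable R : realType.

Lemma coordE N (E : 'M[R]_N) v k (Hk : (k < N)%N) :
  nth 0 (coords E v) k = (invmx E *m v) (Ordinal Hk) 0.
Proof.
rewrite /coords (nth_map (Ordinal Hk)) ?size_enum_ord //.
have -> // : nth (Ordinal Hk) (enum 'I_N) k = Ordinal Hk.
by apply/val_inj; rewrite /= nth_enum_ord.
Qed.

Lemma coords_opp N (E : 'M[R]_N) v : E \in unitmx -> ~~ odd N.-1 ->
  coords (opp_basis E) v = rev (altR (coords E v)).
Proof.
move=> Eu Nodd.
pose Pm : 'M[R]_N := \matrix_(k, j) ((-1) ^+ j * (k == rev_ord j)%:R).
pose Qm : 'M[R]_N := \matrix_(k, j) ((-1) ^+ k * (k == rev_ord j)%:R).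
have hP : opp_basis E = E *m Pm.
  apply/matrixP => i j; rewrite !mxE (bigD1 (rev_ord j)) //= big1 => [|k Hk].
    by rewrite !mxE eqxx mulr1 addr0 mulrC.
  by rewrite !mxE (negbTE Hk) mulr0 mulr0.
have hPQ : Pm *m Qm = 1%:M.
  apply/matrixP => k l; rewrite !mxE (bigD1 (rev_ord l)) //= big1 => [|j Hj].
    by rewrite !mxE rev_ordK eqxx mulr1 addr0 mulrAC -expr2 sqrr_sign mul1r.
  rewrite !mxE; case: (eqVneq j (rev_ord l)) => [Hjl|_]; last by rewrite !mulr0.
  by rewrite Hjl eqxx in Hj.
have [Pu _] := mulmx1_unit hPQ.
set cv := invmx E *m v.
set dv := Qm *m cv.
have hEd : opp_basis E *m dv = v.
  by rewrite hP -mulmxA (mulmxA Pm) hPQ mul1mx /cv mulmxA mulmxV // mul1mx.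
have hOu : opp_basis E \in unitmx by rewrite hP unitmx_mul Eu.
have hdv : invmx (opp_basis E) *m v = dv by rewrite -{1}hEd mulKmx.
have hdvE : forall k, dv k 0 = (-1) ^+ k * cv (rev_ord k) 0.
  move=> k; rewrite mxE (bigD1 (rev_ord k)) //= big1 => [|j Hj].
    by rewrite !mxE rev_ordK eqxx mulr1 addr0.
  rewrite mxE; case: eqP => [Hk|]; last by rewrite mulr0 mul0r.
  by rewrite Hk rev_ordK eqxx in Hj.
apply: (@eq_from_nth _ 0).
  by rewrite size_rev size_altR /coords !size_map.
rewrite /coords size_map size_enum_ord => k Hk.
rewrite -/(coords _ _) coordE hdv hdvE.
have Hs : size (altR (coords E v)) = N by rewrite size_altR /coords size_map size_enum_ord.
have Hk' : (N - k.+1 < N)%N by lia.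
rewrite nth_rev Hs // nth_altR ?(coordE _ _ Hk') /cv; last first.
  by rewrite /coords size_map size_enum_ord.
have -> : rev_ord (Ordinal Hk) = Ordinal Hk' by apply/val_inj.
congr (_ * _); rewrite -signr_odd -[in RHS]signr_odd /=.
have : (N - k.+1 + k = N.-1)%N by lia.
move/(congr1 odd); rewrite oddD (negbTE Nodd).
by case: (odd k); case: (odd (N - k.+1)).
Qed.

End Mat.

Lemma head_rev (x : bool) s : head x (rev s) = last x s.
Proof. by rewrite -[in RHS](revK s) last_rev. Qed.

Lemma last_altB s : ~~ odd (size s).-1 -> last false (altB s) = last false s.
Proof.
case: s => // b s' Ho; rewrite -!nth_last size_altB nth_altB //.
by rewrite (negbTE Ho) addbF.
Qed.

Section Main.
Variable R : realType.

Lemma phi_compat (c : seq R) s : sgn_compat (rev (altR c)) (rev (altB s)) = sgn_compat c s.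
Proof. by rewrite compat_rev compat_alt. Qed.

Lemma psi_compat (c : seq R) t : sgn_compat c (altB (rev t)) = sgn_compat (rev (altR c)) t.
Proof. by rewrite -compat_alt altBK -compat_rev revK. Qed.

End Main.

Lemma nch_phi s : (nchanges (rev (altB s)) + nchanges s)%N = (size s).-1.
Proof. by rewrite nchanges_rev nchanges_alt. Qed.

Lemma nch_psi t : (nchanges (altB (rev t)) + nchanges t)%N = (size t).-1.
Proof. by rewrite -(nchanges_rev t) nchanges_alt size_rev. Qed.

Lemma head_phi s : ~~ odd (size s).-1 -> head false (rev (altB s)) = last false s.
Proof. by move=> H; rewrite head_rev last_altB. Qed.

Lemma last_psi t : ~~ odd (size t).-1 -> last false (altB (rev t)) = head false t.
Proof. by move=> H; rewrite last_altB ?size_rev // last_rev. Qed.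

Theorem lemma5p3 (R : realType) (n : nat) (E : 'M[R]_((4 * n).-1)) :
  (0 < n)%N -> is_Jbasis E -> 0 < \det E ->
  forall v : 'cV[R]_((4 * n).-1),
    ~ Hopen E v <-> Hclosed (opp_basis E) v.
Proof.
move=> n0 /andP[Eu _] _ v.
have Nodd : ~~ odd ((4 * n).-1).-1.
  have -> : ((4 * n).-1).-1 = (2 * (2 * n).-1)%N by lia.
  by rewrite oddM.
rewrite /Hopen /Hclosed coords_opp //.
set c := coords E v.
set d := rev (altR c).
set m := (2 * n).-1.
have hsz : size c = (4 * n).-1 by rewrite /c /coords size_map size_enum_ord.
have hN : (size c).-1 = (2 * m)%N by rewrite hsz /m; lia.
have hNodd : ~~ odd (size c).-1 by rewrite hN oddM.
have hsd : size d = size c by rewrite /d size_rev size_altR.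
have hsum : (Splus c + Sminus d)%N = (2 * m)%N.
  have [s0 Hs0 Es0] := Splus_ex c.
  have [t0 Ht0 Et0] := Sminus_ex d.
  have H1' : sgn_compat d (rev (altB s0)) by rewrite /d phi_compat.
  have H1 := Sminus_lb H1'.
  have H2 : sgn_compat c (altB (rev t0)) by rewrite psi_compat.
  have H3 := Splus_ub H2.
  have H4 := nch_phi s0; have H5 := nch_psi t0.
  rewrite (compat_size Hs0) hN in H4.
  rewrite (compat_size Ht0) hsd hN in H5.
  lia.
have hdpos : (0 < size d)%N by rewrite hsd hsz; lia.
have [Hlt|Hgt|Heq] := ltngtP (Splus c) m.
- split => [H|[H1 _]]; first by exfalso; apply: H; split; [lia | move=> He; lia].
  exfalso; lia.
- split => [_|]; last by move=> _ [H _]; lia.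
  split; first lia.
  move=> He; lia.
- have HSm : Sminus d = m by lia.
  have Hm : m = (2 * n.-1).+1 by rewrite /m; lia.
  have Hodd : odd (Sminus d) by rewrite HSm Hm /= oddM.
  split.
  + move=> Hno; split; first by rewrite HSm.
    move=> _; apply/negPn/negP => Hneg; apply: Hno.
    split => //.
    move=> _.
    have [t0 Ht0 Et0] := Sminus_ex d.
    have Hh := minhead Ht0 Et0 Hodd hdpos.
    rewrite -/(lastnz d) in Hneg; rewrite (negbTE Hneg) in Hh.
    have H2 : sgn_compat c (altB (rev t0)) by rewrite psi_compat.
    have Hsz : size (altB (rev t0)) == size c by rewrite (compat_size H2).
    exists (Tuple Hsz); split => //=.
      have := nch_psi t0; rewrite (compat_size Ht0) hsd hN Et0 HSm Heq /m; lia.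
    by rewrite last_psi // (compat_size Ht0) hsd.
  + move=> [_ Hpos] [_ Hs].
    have [s [Hs1 Hs2 Hs3]] := Hs Heq.
    have Hc : sgn_compat d (rev (altB s)) by rewrite /d phi_compat.
    have Hn : nchanges (rev (altB s)) = Sminus d.
      have := nch_phi s; rewrite size_tuple hN Hs2; lia.
    have Hh := minhead Hc Hn Hodd hdpos.
    rewrite head_phi in Hh; last by rewrite size_tuple.
    by move: Hh; rewrite Hs3 /lastnz (Hpos HSm).
Qed.
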